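(* Let $P_X$, $P_{Y|X}$ and $Q_Y$ be such that $P_{Y|X}(\cdot|x)\ll Q_Y$ for $P_X$-almost all $x$, let $(X,Y)\sim P_XP_{Y|X}$, and let $J\in\mathbb{Z}_{>0}$ have conditional distribution $J\,|\,\{X=x,Y=y\}\sim \mathrm{Geom}\big((\tfrac{\mathrm{d}P_{Y|X}(\cdot|x)}{\mathrm{d}Q_Y}(y)+1)^{-1}\big)$. Then $$\mathbb{E}[\log J]\le \mathbb{E}\big[D_{\mathrm{KL}}(P_{Y|X}(\cdot|X)\Vert Q_Y)\big]+1.$$
   Context: $\mathrm{Geom}(p)$ denotes the geometric distribution on $\{1,2,\ldots\}$ with $\mathbb{P}(J=k)=(1-p)^{k-1}p$. Logarithms are base 2; $D_{\mathrm{KL}}$ is in bits. *)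

(* Defs.v *)
From HB Require Import structures.
From mathcomp Require Import all_boot all_order all_algebra.
From mathcomp Require Import all_classical all_reals all_analysis.
Set Implicit Arguments. Unset Strict Implicit. Unset Printing Implicit Defensive.
Import Order.TTheory GRing.Theory Num.Theory.
Local Open Scope ring_scope.
Local Open Scope ereal_scope.

Definition log2 {R : realType} (x : R) : R := (ln x / ln 2)%R.

(* E[log2 J] for J ~ Geom(p) on {1,2,...}, P(J = k) = (1-p)^(k-1) p *)
Definition geom_Elog {R : realType} (p : R) : \bar R :=
  \sum_(1 <= k <oo) (((1 - p) ^+ k.-1 * p * log2 k%:R)%R)%:E.

(* KL divergence D(P || Q) in bits, for P << Q with density g = dP/dQ:
   D(P||Q) = \int g log2 g dQ  (with 0 log 0 = 0) *)
Definition KL_dens {d} {U : measurableType d} {R : realType}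
  (Q : {measure set U -> \bar R}) (g : U -> R) : \bar R :=
  \int[Q]_y ((g y * log2 (g y))%R)%:E.

(* Main.v *)
Require Import Defs.
From HB Require Import structures.
From mathcomp Require Import all_boot all_order all_algebra.
From mathcomp Require Import all_classical all_reals all_analysis.
From mathcomp Require Import measurable_realfun.
From mathcomp Require Import ring lra.
Import Order.TTheory GRing.Theory Num.Theory.
Local Open Scope classical_set_scope.
Local Open Scope ring_scope.
Local Open Scope classical_set_scope.
Local Open Scope ring_scope.

Section P1.
Variable R : realType.

Lemma ln_le_sub1 {x : R} : 0 < x -> ln x <= x - 1.
Proof.
move=> x0; have := @le_ln1Dx R (x - 1).
have -> : 1 + (x - 1) = x by ring.
apply; lra.
Qed.

Lemma geom_partial (p : R) : 0 < p -> p <= 1 -> forall n,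
  \sum_(1 <= k < n.+1) (1-p)^+k.-1 * p * ln k%:R <=
  (1 - (1-p)^+n) * ln p^-1 - n%:R * p * (1-p)^+n.
Proof.
move=> p0 p1; elim=> [|n IH].
  by rewrite big_geq // expr0 subrr mul0r mul0r mul0r subrr.
rewrite big_nat_recr //=.
set Q := (1-p)^+n.
have Q0 : 0 <= Q by apply: exprn_ge0; lra.
have hl : ln (n.+1)%:R <= ln p^-1 + (n.+1)%:R * p - 1.
  have n0 : 0 < (n.+1)%:R :> R by rewrite ltr0n.
  have := ln_le_sub1 (mulr_gt0 n0 p0).
  rewrite lnM ?posrE // lnV ?posrE //; lra.
have T : Q * p * ln (n.+1)%:R <= Q * p * (ln p^-1 + (n.+1)%:R * p - 1).
  by apply: ler_wpM2l => //; apply: mulr_ge0 => //; lra.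
have E : (1 - (1 - p) ^+ n.+1) * ln p^-1 - (n.+1)%:R * p * (1 - p) ^+ n.+1
   = ((1 - Q) * ln p^-1 - n%:R * p * Q) + Q * p * (ln p^-1 + (n.+1)%:R * p - 1).
  by rewrite exprS /Q -natr1; ring.
rewrite E; apply: lerD => //.
Qed.

End P1.

Section P1b.
Variable R : realType.

Lemma ln2_gt0 : 0 < ln (2:R).
Proof. by apply: ln_gt0; lra. Qed.

Lemma geom_term_ge0 (p : R) k : 0 < p -> p <= 1 -> (1 <= k)%N ->
  0 <= (1 - p) ^+ k.-1 * p * log2 k%:R.
Proof.
move=> p0 p1 k1; apply: mulr_ge0; first (apply: mulr_ge0; [apply: exprn_ge0|]; lra).
rewrite /log2; apply: divr_ge0; last exact: ltW ln2_gt0.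
by apply: ln_ge0; rewrite ler1n.
Qed.

Lemma geom_Elog_ge0 (p : R) : 0 < p -> p <= 1 -> (0 <= geom_Elog p)%E.
Proof.
move=> p0 p1; rewrite /geom_Elog; apply: nneseries_ge0 => n n1 _.
by rewrite lee_fin geom_term_ge0.
Qed.

Lemma geom_Elog_le (p : R) : 0 < p -> p <= 1 -> (geom_Elog p <= (log2 p^-1)%:E)%E.
Proof.
move=> p0 p1; rewrite /geom_Elog; apply: lime_le.
  by apply: is_cvg_ereal_nneg_natsum => n n1; rewrite lee_fin geom_term_ge0.
apply: nearW => n; rewrite sumEFin lee_fin.
have L0 : 0 <= ln (p^-1).
  by apply: ln_ge0; rewrite invf_ge1 //.
case: n => [|m]; first by rewrite big_geq // /log2 divr_ge0 // ltW // ln2_gt0.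
rewrite /log2; under eq_bigr do rewrite mulrA.
rewrite -mulr_suml ler_pM2r ?invr_gt0 ?ln2_gt0 //.
apply: (le_trans (@geom_partial R p p0 p1 m)).
set Q := (1-p)^+m.
have Q0 : 0 <= Q by apply: exprn_ge0; lra.
have Q1 : Q <= 1 by apply: exprn_ile1; lra.
have : 0 <= m%:R * p * Q by rewrite !mulr_ge0 // ltW.
have : 0 <= Q * ln p^-1 by rewrite mulr_ge0.
rewrite mulrBl mul1r; lra.
Qed.
End P1b.

Section P4.
Variable R : realType.
Definition tt2 : R := (2 * ln (2:R))^-1.

Lemma pt_ineq (F : R) : 0 <= F ->
  F * log2 (F + 1) <= F * log2 F + (tt2 + (1 - tt2) * F).
Proof.
move=> F0; have l2 := @ln2_gt0 R.
have t0 : 0 < tt2 by rewrite /tt2 invr_gt0 mulr_gt0.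
have t1 : tt2 <= 1.
  rewrite /tt2 invf_le1 ?mulr_gt0 //.
  have : 1 - 2^-1 <= ln (2:R).
    have := @ln_le_sub1 R (2^-1) ltac:(lra). rewrite lnV ?posrE //; lra.
  lra.
have [->|Fp] := eqVneq F 0.
  rewrite !mul0r add0r mulr0 addr0; lra.
have Fp' : 0 < F by rewrite lt_def Fp F0.
have h : ln ((F + 1) / (2 * F)) <= (F + 1) / (2 * F) - 1.
  apply: ln_le_sub1; apply: divr_gt0; lra.
rewrite ln_div ?posrE ?lnM ?posrE in h; try lra.
have := ler_wpM2l F0 h.
have -> : F * ((F + 1) / (2 * F) - 1) = (1 - F) / 2 by field; lra.
move=> H.
rewrite /log2 /tt2.
have -> : F * (ln F / ln 2) + ((2 * ln 2)^-1 + (1 - (2 * ln 2)^-1) * F)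
   = (F * ln F + F * ln 2 + (1 - F) / 2) / ln (2:R).
  by field; lra.
rewrite mulrA ler_pM2r ?invr_gt0 //.
move: H; rewrite !mulrBr mulrDr; lra.
Qed.
End P4.
Arguments tt2 {R}.

Local Open Scope ereal_scope.

Section kfin.
Context d d' (X : measurableType d) (Y : measurableType d') (R : realType)
  (k : R.-pker X ~> Y) (x : X).
Definition kx : set Y -> \bar R := k x.
HB.instance Definition _ := Measure.on kx.
HB.instance Definition _ := Measure_isProbability.Build _ _ _ kx (@prob_kernel _ _ _ _ _ k x).
End kfin.


Lemma cov d (T : measurableType d) (R : realType)
  (nu : {finite_measure set T -> \bar R}) (mu : {sigma_finite_measure set T -> \bar R})
  (g : T -> R) (g0 : forall y, (0 <= g y)%R) (mg : measurable_fun setT g)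
  (hd : forall A, measurable A -> nu A = \int[mu]_(y in A) (g y)%:E)
  (phi : T -> \bar R) (phi0 : forall y, 0 <= phi y) (mphi : measurable_fun setT phi) :
  \int[nu]_y phi y = \int[mu]_y (phi y * (g y)%:E).
Proof.
have numu : nu `<< mu.
  apply/null_content_dominatesP => A mA muA.
  rewrite hd // null_set_integral //.
  by apply/measurable_EFinP; exact: measurable_funTS.
rewrite -(Radon_Nikodym_SigmaFinite.change_of_variables numu phi0 measurableT mphi).
have iRN := Radon_Nikodym_SigmaFinite.f_integrable numu.
have mRN := measurable_int _ iRN.
apply: ae_eq_integral => //.
- exact: emeasurable_funM.
- by apply: emeasurable_funM => //; exact/measurable_EFinP.
apply: ae_eqe_mul2l.
apply: integral_ae_eq => //.
- exact/measurable_EFinP.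
move=> E _ mE; rewrite -Radon_Nikodym_SigmaFinite.f_integral //.
exact: hd.
Qed.

Lemma noint_pinfty d (T : measurableType d) (R : realType)
  (mu : probability T R) (a : T -> \bar R) (M : R) : (0 <= M)%R ->
  measurable_fun setT a -> (forall y, (- M)%:E <= a y) ->
  ~ mu.-integrable setT a -> \int[mu]_y a y = +oo.
Proof.
move=> M0 ma aM nai.
have mn : measurable_fun setT a^\- := measurable_funeneg ma.
have mp : measurable_fun setT a^\+ := measurable_funepos ma.
have n0 : 0 <= \int[mu]_y a^\- y by apply: integral_ge0 => y _.
have nM : \int[mu]_y a^\- y <= M%:E.
  apply: (@le_trans _ _ (\int[mu]_y (cst M%:E) y)).
    apply: ge0_le_integral => //.
    move=> y _; rewrite funenegE /= ge_max lee_fin M0 andbT.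
    by rewrite leeNl; exact: aM.
  rewrite integral_cst //. set z := (X in _ * X); have -> : z = 1 by exact: probability_setT. by rewrite mule1.
have pinf : \int[mu]_y a^\+ y = +oo.
  have : \int[mu]_y `|a y| = +oo.
    apply/eqP; rewrite eq_le leey /= leNgt; apply/negP => h.
    by apply: nai; apply/integrableP; split.
  rewrite (_ : (fun y => `|a y|) = a^\+ \+ a^\-); last by rewrite -fune_abse.
  rewrite ge0_integralD //.
  have : \int[mu]_y a^\- y \is a fin_num by rewrite ge0_fin_numE // (le_lt_trans nM) ?ltry.
  move: (\int[mu]_y a^\- y) => n; move: (\int[mu]_y a^\+ y) => p.
  by case: p => [p||]; case: n.
rewrite integralE pinf.
have : \int[mu]_y a^\- y \is a fin_num by rewrite ge0_fin_numE // (le_lt_trans nM) ?ltry.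
by case: (\int[mu]_y a^\- y).
Qed.

Local Open Scope ring_scope.
Lemma tt2_ge0 (R : realType) : (0 <= @tt2 R)%R.
Proof. by rewrite /tt2 invr_ge0 mulr_ge0 // ltW // ln2_gt0. Qed.

Lemma tt2_le1 (R : realType) : (@tt2 R <= 1)%R.
Proof.
have l2 := @ln2_gt0 R.
rewrite /tt2 invf_le1 ?mulr_gt0 //.
have : 1 - 2^-1 <= ln (2:R).
  have := @ln_le_sub1 R (2^-1) ltac:(lra). rewrite lnV ?posrE //; lra.
lra.
Qed.

Local Open Scope ring_scope.
Local Open Scope classical_set_scope.
Local Open Scope ring_scope.

Lemma xlog_ge {R : realType} (F : R) : 0 <= F -> -2 <= F * log2 F.
Proof.
move=> F0; have l2 := @ln2_gt0 R.
have l2h : 2^-1 <= ln (2:R).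
  have := @ln_le_sub1 R (2^-1) ltac:(lra). rewrite lnV ?posrE //; lra.
have [->|Fp] := eqVneq F 0; first by rewrite mul0r; lra.
have Fp' : 0 < F by rewrite lt_def Fp F0.
have h : ln (F^-1) <= F^-1 - 1 by apply: ln_le_sub1; rewrite invr_gt0.
rewrite lnV ?posrE // in h.
have h2 : F - 1 <= F * ln F.
  have := ler_wpM2l F0 h.
  have -> : F * (F^-1 - 1) = 1 - F by field; lra.
  lra.
rewrite /log2 mulrA.
have : -2 * ln (2:R) <= F * ln F by lra.
move=> h3.
rewrite -(@ler_pM2r _ (ln (2:R))) // mulfVK ?gt_eqF //; lra.
Qed.

Lemma mlog2 {R : realType} : measurable_fun setT (@log2 R).
Proof.
apply: measurable_funM => //; exact: measurable_ln.
Qed.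

Local Open Scope ereal_scope.

Lemma int_c d (T : measurableType d) (R : realType) (mu : probability T R)
  (F : T -> R) (F0 : forall y, (0 <= F y)%R) (mF : measurable_fun setT F)
  (h1 : \int[mu]_y (F y)%:E = 1) (t : R) (t0 : (0 <= t)%R) (t1 : (t <= 1)%R) :
  \int[mu]_y ((t + (1 - t) * F y)%R)%:E = 1.
Proof.
under eq_integral do rewrite EFinD EFinM.
rewrite ge0_integralD //; last 2 first.
- by move=> y _; rewrite -EFinM lee_fin mulr_ge0 // subr_ge0.
- by apply: emeasurable_funM => //; exact/measurable_EFinP.
rewrite ge0_integralZl //; last 3 first.
- exact/measurable_EFinP.
- by move=> y _; rewrite lee_fin.
- by rewrite lee_fin subr_ge0.
rewrite h1 mule1 integral_cst //.
set z := (X in _ * X); have -> : z = 1 by exact: probability_setT.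
by rewrite mule1 -EFinD subrKC.
Qed.

Lemma inner d (Y : measurableType d) (R : realType)
  (nu : {finite_measure set Y -> \bar R}) (mu : probability Y R)
  (F : Y -> R) (F0 : forall y, (0 <= F y)%R) (mF : measurable_fun setT F)
  (hd : forall A, measurable A -> nu A = \int[mu]_(y in A) (F y)%:E)
  (hnu1 : nu setT = 1)
  (h : Y -> \bar R) (h0 : forall y, 0 <= h y) (mh : measurable_fun setT h)
  (hle : forall y, h y <= (log2 (F y + 1))%:E) :
  \int[nu]_y h y <= KL_dens mu F + 1.
Proof.
have l2 := @ln2_gt0 R.
have mlg : measurable_fun setT (fun y => log2 (F y + 1)).
  apply: measurableT_comp; first exact: mlog2.
  by apply: measurable_funD => //.
have lg0 y : (0 <= log2 (F y + 1))%R.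
  rewrite /log2; apply: divr_ge0; last exact: ltW l2.
  apply: ln_ge0; have := F0 y; lra.
apply: (@le_trans _ _ (\int[nu]_y (log2 (F y + 1))%:E)).
  apply: (@ge0_le_integral _ _ _ nu setT measurableT).
  - by move=> y _; exact: h0.
  - exact: mh.
  - exact/measurable_EFinP.
  - by move=> y _; exact: hle.
rewrite (@cov _ _ _ nu mu F F0 mF hd); last 2 first.
  - by move=> y; rewrite lee_fin.
  - exact/measurable_EFinP.
under eq_integral do rewrite -EFinM mulrC.
have h1 : \int[mu]_y (F y)%:E = 1.
  by rewrite -hnu1 hd // .
pose a := fun y => (F y * log2 (F y))%R.
have ma : measurable_fun setT a.
  apply: measurable_funM => //; apply: measurableT_comp => //; exact: mlog2.
have hc := @int_c _ _ _ mu F F0 mF h1 _ (tt2_ge0 R) (tt2_le1 R).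
apply: (@le_trans _ _ (\int[mu]_y ((a y + (tt2 + (1 - tt2) * F y))%R)%:E)).
  apply: (@ge0_le_integral _ _ _ mu setT measurableT).
  - by move=> y _; rewrite lee_fin mulr_ge0.
  - by apply/measurable_EFinP; apply: measurable_funM.
  - apply/measurable_EFinP; apply: measurable_funD => //.
    by apply: measurable_funD => //; apply: measurable_funM.
  - by move=> y _; rewrite lee_fin; exact: pt_ineq.
have mc : measurable_fun setT (fun y => (tt2 + (1 - tt2) * F y)%R : R).
  by apply: measurable_funD => //; apply: measurable_funM.
case: (pselect (mu.-integrable setT (EFin \o a))) => ia.
  under eq_integral do rewrite EFinD.
  rewrite integralD //; first by rewrite hc.
  apply/integrableP; split; first exact/measurable_EFinP.
  under eq_integral do rewrite gee0_abs ?lee_fin ?addr_ge0 ?mulr_ge0 ?tt2_ge0 ?subr_ge0 ?tt2_le1 //.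
  by rewrite hc ltry.
rewrite /KL_dens (@noint_pinfty _ _ _ mu (EFin \o a) 2) //.
- by rewrite addye // leey.
- exact/measurable_EFinP.
- by move=> y; rewrite /= lee_fin /a; exact: xlog_ge.
Qed.

Local Open Scope ring_scope.
Local Open Scope classical_set_scope.
Local Open Scope ring_scope.
Local Open Scope ereal_scope.

Lemma int_ge_M d (T : measurableType d) (R : realType)
  (mu : probability T R) (a : T -> \bar R) (M : R) : (0 <= M)%R ->
  measurable_fun setT a -> (forall y, (- M)%:E <= a y) ->
  (- M)%:E <= \int[mu]_y a y.
Proof.
move=> M0 ma aM.
have mn : measurable_fun setT a^\- := measurable_funeneg ma.
have nM : \int[mu]_y a^\- y <= M%:E.
  apply: (@le_trans _ _ (\int[mu]_y (cst M%:E) y)).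
    apply: ge0_le_integral => //.
    move=> y _; rewrite funenegE /= ge_max lee_fin M0 andbT.
    by rewrite leeNl; exact: aM.
  rewrite integral_cst //.
  set z := (X in _ * X); have -> : z = 1 by exact: probability_setT.
  by rewrite mule1.
have p0 : 0 <= \int[mu]_y a^\+ y by apply: integral_ge0 => y _.
rewrite integralE EFinN.
apply: (@le_trans _ _ (0 - M%:E)); first by rewrite sub0e.
by apply: leeB.
Qed.

Local Open Scope ring_scope.
Lemma mphi {R : realType} : measurable_fun setT (fun t : R => (`|t| + 1)^-1)%R.
Proof.
apply: continuous_measurable_fun => t.
have h : (fun x : R => `|x| + 1) @ t --> `|t| + 1.
  apply: cvgD; [exact: norm_continuous | exact: cvg_cst].
apply: cvgV => //.
Qed.
Local Open Scope ereal_scope.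

Local Open Scope ring_scope.
Local Open Scope classical_set_scope.
Local Open Scope ring_scope.
Local Open Scope ereal_scope.

Theorem mainTheorem3 (R : realType) (d d' : measure_display)
  (X : measurableType d) (Y : measurableType d')
  (PX : probability X R) (PYX : R.-pker X ~> Y) (QY : probability Y R)
  (f : X -> Y -> R)
  (f_ge0 : forall x y, (0 <= f x y)%R)
  (f_meas : measurable_fun setT (fun xy : X * Y => f xy.1 xy.2))
  (f_dens : {ae PX, forall x, forall A, measurable A ->
              PYX x A = \int[QY]_(y in A) (f x y)%:E}) :
  \int[PX]_x \int[PYX x]_y geom_Elog ((f x y + 1)^-1)%R
  <= \int[PX]_x KL_dens QY (f x) + 1.
Proof.
pose G := fun xy : X * Y => f xy.1 xy.2.
pose p := fun xy : X * Y => ((G xy + 1)^-1)%R.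
have mp : measurable_fun setT p.
  have -> : p = (fun t : R => (`|t| + 1)^-1)%R \o G.
    by apply/funext => xy; rewrite /p /= ger0_norm // f_ge0.
  exact: measurableT_comp mphi f_meas.
have p0 xy : (0 < p xy)%R.
  by rewrite /p invr_gt0; have := f_ge0 xy.1 xy.2; rewrite /G; lra.
have p1 xy : (p xy <= 1)%R.
  rewrite /p invf_le1; have := f_ge0 xy.1 xy.2; rewrite /G; lra.
pose H := fun xy => geom_Elog (p xy).
have H0 xy : 0 <= H xy := @geom_Elog_ge0 R _ (p0 xy) (p1 xy).
have Hle x y : H (x, y) <= (log2 (f x y + 1))%:E.
  by have := @geom_Elog_le R _ (p0 (x, y)) (p1 (x, y)); rewrite /p invrK.
have mH : measurable_fun setT H.
  have -> : H = fun xy => \sum_(i <oo | i \in [pred k | (1 <= k)%N])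
      (((1 - p xy) ^+ i.-1 * p xy * log2 i%:R)%R)%:E.
    apply/funext => xy; rewrite /H /geom_Elog eseries_cond.
    by apply: congr_lim; apply/funext => n; apply: eq_bigl => i; rewrite inE.
  apply: ge0_emeasurable_sum.
    by move=> k xy _ k1; rewrite lee_fin geom_term_ge0.
  move=> k _; apply/measurable_EFinP; apply: measurable_funM => //.
  apply: measurable_funM => //; apply: measurable_funX.
  by apply: measurable_funB.
pose L := fun x => \int[PYX x]_y H (x, y).
change (\int[PX]_x L x <= \int[PX]_x KL_dens QY (f x) + 1).
have mL : measurable_fun setT L := measurable_fun_integral_finite_kernel H PYX H0 mH.
have L0 x : 0 <= L x by apply: integral_ge0 => y _.
pose a := fun xy : X * Y => (G xy * log2 (G xy))%R.
have ma : measurable_fun setT a.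
  apply: measurable_funM => //; apply: measurableT_comp => //; exact: mlog2.
pose K := fun x => KL_dens QY (f x).
change (\int[PX]_x L x <= \int[PX]_x K x + 1).
have mK : measurable_fun setT K.
  have -> : K = fun x => \int[QY]_y (EFin \o a)^\+ (x, y)
                        - \int[QY]_y (EFin \o a)^\- (x, y).
    apply/funext => x; rewrite /K /KL_dens integralE.
    by congr (_ - _); apply: eq_integral => y _; rewrite ?funeposE ?funenegE.
  have mea : measurable_fun setT (EFin \o a) by exact/measurable_EFinP.
  apply: emeasurable_funB.
  - exact: (measurable_fun_fubini_tonelli_F (m2:=QY) _ (measurable_funepos mea) (funepos_ge0 _)).
  - exact: (measurable_fun_fubini_tonelli_F (m2:=QY) _ (measurable_funeneg mea) (funeneg_ge0 _)).
have mfx x : measurable_fun setT (f x).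
  exact: (measurableT_comp f_meas (pair1_measurable x)).
have Kge x : (- 2%R)%:E <= K x.
  apply: int_ge_M => //.
    apply/measurable_EFinP; apply: measurable_funM => //.
    apply: measurableT_comp => //; exact: mlog2.
  by move=> y; rewrite lee_fin; apply: xlog_ge.
have ae : {ae PX, forall x, setT x -> L x + 1 <= K x + 2%:E}.
  apply: filterS f_dens => x hx _.
  have h := @inner _ Y R (@kx _ _ _ _ _ PYX x) QY (f x) (f_ge0 x) (mfx x) hx
    (@prob_kernel _ _ _ _ _ PYX x) (fun y => H (x, y)) (fun y => H0 (x, y))
    (measurableT_comp mH (pair1_measurable x)) (Hle x).
  have -> : (2%:E : \bar R) = 1 + 1 by rewrite -EFinD.
  by rewrite addeA; apply: leeD2r; exact: h.
have main : \int[PX]_x (L x + 1) <= \int[PX]_x (K x + 2%:E).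
  apply: ae_ge0_le_integral => //.
  - by move=> x _; rewrite adde_ge0.
  - by apply: emeasurable_funD.
  - move=> x _; have := Kge x; case: (K x) => [r h||] //.
    by rewrite (_ : _ + _ = (r + 2)%R%:E) // lee_fin; rewrite lee_fin in h; lra.
    by move=> _; rewrite (_ : _ + _ = +oo) // leey.
  - by apply: emeasurable_funD.
rewrite ge0_integralD // in main.
have intc (r : \bar R) : \int[PX]_x (cst r) x = r.
  rewrite integral_cst //.
  set z := (X in _ * X); have -> : z = 1 by exact: probability_setT.
  by rewrite mule1.
rewrite intc in main.
case: (pselect (PX.-integrable setT K)) => iK.
  have i2 : PX.-integrable setT (fun=> 2%:E).
    exact: (finite_measure_integrable_cst PX 2%R measurableT).
  rewrite (integralD measurableT iK i2) in main.
  rewrite intc in main.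
  have : \int[PX]_x K x \is a fin_num by apply: integrable_fin_num.
  have : 0 <= \int[PX]_x L x by apply: integral_ge0.
  move: main.
  case: (\int[PX]_x L x) => [l| |] //; case: (\int[PX]_x K x) => [k| |] //.
  by rewrite -!EFinD !lee_fin; lra.
rewrite (@noint_pinfty _ _ _ PX K 2) //.
  by rewrite addye // leey.
Qed.
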